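(* Let $0<\delta<1$, $t>1$, $\lambda_c:=1/(t^{1-\delta}-1)$, $\lambda_c\le\lambda\le t^{1-\delta}-1$, write $\lambda=\lambda_c(1+\Lambda)$ and $\omega:=\sqrt{\frac{\lambda_c t}{2}}\frac{\ln(1+\Lambda)}{1+\lambda_c}$. Let $a=a(t)$ satisfy $t^{-\delta/2}\ll a\ll t^{-\delta/3}$, set $k:=t^{\delta-1}(1-a)$, and let $$J_{B1}(t;\lambda):=\int_{1-t^{\delta-1}}^{1-k}(1-z)^{-1/2}{\rm e}^{{\rm i} tF(z;\lambda)}\,{\rm d} z.$$ Then, as $t\to\infty$, $$J_{B1}(t;\lambda)=\exp\!\big({\rm i} tF(1-t^{\delta-1};\lambda)-{\rm i}\omega^2\big)\,t^{-1/2}\sqrt{\frac{2}{1+\lambda_c}}\left(\int_\omega^{\omega+a\sqrt{\lambda_c t/2}}{\rm e}^{{\rm i}\xi^2}\,{\rm d}\xi\right)+{\cal O}\!\left(t^{-\frac12+\frac{3\delta}{2}}a^4\right).$$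
   Context: $F(z;\lambda):=(1-z)\ln(1-z)+z\ln z+z\ln\lambda$ with branch cuts $(-\infty,0]$ and $[1,\infty)$; the integral defining $J_{B1}$ is along the real segment. $f\ll g$ means $f/g\to0$ as $t\to\infty$. *)

(* Defs.v *)
From Stdlib Require Import Reals.
From Coquelicot Require Import Coquelicot.
Open Scope R_scope.

Definition Fphase (z lam : R) : R :=
  (1 - z) * ln (1 - z) + z * ln z + z * ln lam.

Definition cexpi (theta : R) : C := (cos theta, sin theta).

Definition CRInt (f : R -> C) (a b : R) : C :=
  (RInt (fun x => fst (f x)) a b, RInt (fun x => snd (f x)) a b).

Definition lam_c (delta t : R) : R := 1 / (Rpower t (1 - delta) - 1).

(* omega := sqrt(lambda_c t / 2) * ln(1+Lambda)/(1+lambda_c), lambda = lambda_c (1+Lambda) *)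
Definition omega (delta t lam : R) : R :=
  sqrt (lam_c delta t * t / 2) * ln (lam / lam_c delta t) / (1 + lam_c delta t).

Definition J_B1 (delta t lam a : R) : C :=
  let k := Rpower t (delta - 1) * (1 - a) in
  CRInt (fun z => Cmult (RtoC (/ sqrt (1 - z))) (cexpi (t * Fphase z lam)))
        (1 - Rpower t (delta - 1)) (1 - k).

Definition J_main (delta t lam a : R) : C :=
  let w := omega delta t lam in
  Cmult (cexpi (t * Fphase (1 - Rpower t (delta - 1)) lam - w ^ 2))
   (Cmult (RtoC (Rpower t (-1/2) * sqrt (2 / (1 + lam_c delta t))))
     (CRInt (fun xi => cexpi (xi ^ 2)) w (w + a * sqrt (lam_c delta t * t / 2)))).

(* Main.v *)
Require Import Defs.
From Stdlib Require Import Reals.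
From Coquelicot Require Import Coquelicot.
Open Scope R_scope.
From Stdlib Require Import Lra Psatz.
From Stdlib Require Import Lra Psatz.

Lemma mvt_bound (f df : R -> R) x y K : x <= y ->
  (forall c, x <= c <= y -> is_derive f c (df c)) ->
  (forall c, x <= c <= y -> Rabs (df c) <= K) ->
  Rabs (f y - f x) <= K * (y - x).
Proof.
  intros Hxy Hd Hb.
  destruct (MVT_gen f x y df) as [c [Hc E]].
  - intros c Hc. rewrite Rmin_left in Hc by lra. rewrite Rmax_right in Hc by lra.
    apply Hd; lra.
  - intros c Hc. rewrite Rmin_left in Hc by lra. rewrite Rmax_right in Hc by lra.
    apply continuity_pt_filterlim. apply (ex_derive_continuous (K:=R_AbsRing) (V:=R_NormedModule) f). eexists. apply Hd; lra.
  - rewrite Rmin_left in Hc by lra. rewrite Rmax_right in Hc by lra.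
    rewrite E, Rabs_mult, (Rabs_right (y - x)) by lra.
    apply Rmult_le_compat_r; [lra|]. apply Hb; lra.
Qed.

Lemma cos_lip x y : Rabs (cos x - cos y) <= Rabs (x - y).
Proof.
  destruct (Rle_dec y x).
  - rewrite (Rabs_right (x - y)) by lra. rewrite <- (Rmult_1_l (x - y)).
    apply (mvt_bound cos (fun c => - sin c)); auto.
    + intros c _. auto_derive; auto; ring.
    + intros c _. rewrite Rabs_Ropp. apply Rabs_le, SIN_bound.
  - rewrite Rabs_minus_sym, (Rabs_minus_sym x). rewrite (Rabs_right (y - x)) by lra.
    rewrite <- (Rmult_1_l (y - x)).
    apply (mvt_bound cos (fun c => - sin c)); [lra| |].
    + intros c _. auto_derive; auto; ring.
    + intros c _. rewrite Rabs_Ropp. apply Rabs_le, SIN_bound.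
Qed.

Lemma sin_lip x y : Rabs (sin x - sin y) <= Rabs (x - y).
Proof.
  destruct (Rle_dec y x).
  - rewrite (Rabs_right (x - y)) by lra. rewrite <- (Rmult_1_l (x - y)).
    apply (mvt_bound sin cos); auto.
    + intros c _. auto_derive; auto; ring.
    + intros c _. apply Rabs_le, COS_bound.
  - rewrite Rabs_minus_sym, (Rabs_minus_sym x). rewrite (Rabs_right (y - x)) by lra.
    rewrite <- (Rmult_1_l (y - x)).
    apply (mvt_bound sin cos); [lra| |].
    + intros c _. auto_derive; auto; ring.
    + intros c _. apply Rabs_le, COS_bound.
Qed.

Lemma core_bound (A B P Q : R) (c : R -> R) :
  (forall x, Rabs (c x) <= 1) -> (forall x y, Rabs (c x - c y) <= Rabs (x - y)) ->
  Rabs (A * c P - B * c Q) <= Rabs (A - B) + Rabs B * Rabs (P - Q).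
Proof.
  intros H1 H2.
  replace (A * c P - B * c Q) with ((A - B) * c P + B * (c P - c Q)) by ring.
  eapply Rle_trans; [apply Rabs_triang|]. rewrite !Rabs_mult.
  apply Rplus_le_compat.
  - rewrite <- (Rmult_1_r (Rabs (A - B))) at 2. apply Rmult_le_compat_l; auto using Rabs_pos.
  - apply Rmult_le_compat_l; auto using Rabs_pos.
Qed.
Lemma taylor3 lam e k z : 0 < lam -> 0 < k -> k <= e -> e <= 1/2 -> 1-e <= z <= 1-k ->
 Rabs (Fphase z lam - Fphase (1-e) lam - (ln (1-e) - ln e + ln lam)*(z-(1-e))
        - (z-(1-e))^2 * (/(1-e) + /e)/2) <= (4 + /(k*k))*(z-(1-e))^3.
Proof.
  intros Hl Hk Hke He Hz.
  set (z0 := 1 - e). set (M := 4 + /(k*k)).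
  assert (HM : 0 <= M). { unfold M. assert (0 < /(k*k)) by (apply Rinv_0_lt_compat; nra). lra. }
  assert (A : forall c, z0 <= c <= 1-k -> Rabs ((/c + /(1-c)) - (/(1-e) + /e)) <= M*(c-z0)).
  { intros c Hc. unfold z0 in *.
    replace ((/c + /(1-c)) - (/(1-e) + /e)) with ((c-(1-e))*( /((1-c)*e) - /(c*(1-e)) ))
      by (field; repeat split; lra).
    rewrite Rabs_mult, (Rabs_right (c - (1-e))) by lra. rewrite Rmult_comm.
    apply Rmult_le_compat_r; [lra|].
    assert (H1 : 0 < /((1-c)*e)) by (apply Rinv_0_lt_compat; nra).
    assert (H2 : 0 < /(c*(1-e))) by (apply Rinv_0_lt_compat; nra).
    assert (H3 : /((1-c)*e) <= /(k*k)) by (apply Rinv_le_contravar; nra).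
    assert (H4 : /(c*(1-e)) <= 4).
    { replace 4 with (/(/4)) by field. apply Rinv_le_contravar; nra. }
    unfold M. apply Rabs_le. lra. }
  assert (B : forall c, z0 <= c <= 1-k ->
     Rabs (ln c - ln (1-c) + ln lam - (ln (1-e) - ln e + ln lam) - (c - z0)*(/(1-e)+/e))
       <= M*(c-z0)^2).
  { intros c Hc.
    set (g1 := fun x => ln x - ln (1-x) + ln lam - (ln (1-e) - ln e + ln lam) - (x - z0)*(/(1-e)+/e)).
    assert (E : g1 z0 = 0) by (unfold g1, z0; cbv beta; replace (1-(1-e)) with e by ring; ring).
    change (Rabs (g1 c) <= M*(c-z0)^2). rewrite <- (Rminus_0_r (g1 c)), <- E.
    replace (M*(c-z0)^2) with ((M*(c-z0))*(c-z0)) by ring.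
    apply (mvt_bound g1 (fun x => (/x + /(1-x)) - (/(1-e) + /e))); [lra| |].
    - intros x Hx. unfold g1. auto_derive.
      + unfold z0 in *. repeat split; lra.
      + field. unfold z0 in *. split; lra.
    - intros x Hx. eapply Rle_trans. apply A; lra. apply Rmult_le_compat_l; lra. }
  set (g := fun x => Fphase x lam - Fphase z0 lam - (ln (1-e) - ln e + ln lam)*(x-z0)
        - (x-z0)^2 * (/(1-e) + /e)/2).
  change (Rabs (g z) <= M*(z-z0)^3).
  assert (E : g z0 = 0) by (unfold g; cbv beta; unfold Rdiv; ring).
  rewrite <- (Rminus_0_r (g z)), <- E.
  replace (M*(z-z0)^3) with ((M*(z-z0)^2)*(z-z0)) by ring.
  apply (mvt_bound g (fun x => ln x - ln (1-x) + ln lam - (ln (1-e) - ln e + ln lam) - (x - z0)*(/(1-e)+/e))); [unfold z0 in *; lra| |].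
  - intros x Hx. unfold g, Fphase. auto_derive.
    + unfold z0 in *. repeat split; lra.
    + replace (1 + - x) with (1 - x) by ring. field. unfold z0 in *. repeat split; lra.
  - intros x Hx. eapply Rle_trans. apply B; lra. apply Rmult_le_compat_l; [lra|].
    apply pow_incr. lra.
Qed.

Lemma exp_le x y : x <= y -> exp x <= exp y.
Proof. intros [H|H]; [left; apply exp_increasing; auto| rewrite H; lra]. Qed.

Lemma lim_ev f : is_lim f p_infty 0 -> forall eps, 0 < eps ->
  exists M, forall x, M < x -> Rabs (f x) < eps.
Proof.
  intros H eps He.
  assert (Hl : Rbar_locally 0 (fun y => Rabs y < eps)).
  { simpl. exists (mkposreal eps He). intros y Hy.
    unfold ball in Hy; simpl in Hy; unfold AbsRing_ball, abs, minus, plus, opp in Hy; simpl in Hy.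
    replace y with (y + - 0) by ring. exact Hy. }
  destruct (H _ Hl) as [M HM]. exists M. exact HM.
Qed.

Lemma rint_rot B Th (psi : R -> R) a b :
  ex_RInt (fun x => cos (psi x)) a b -> ex_RInt (fun x => sin (psi x)) a b ->
  RInt (fun x => B * cos (Th + psi x)) a b =
    B * (cos Th * RInt (fun x => cos (psi x)) a b - sin Th * RInt (fun x => sin (psi x)) a b)
  /\ RInt (fun x => B * sin (Th + psi x)) a b =
    B * (sin Th * RInt (fun x => cos (psi x)) a b + cos Th * RInt (fun x => sin (psi x)) a b).
Proof.
  intros H1 H2. pose proof (RInt_correct (V:=R_CompleteNormedModule) _ _ _ H1) as I1.
  pose proof (RInt_correct (V:=R_CompleteNormedModule) _ _ _ H2) as I2. clear H1 H2. rename I1 into H1. rename I2 into H2. split.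
  - apply is_RInt_unique.
    match goal with |- is_RInt _ _ _ ?v => replace v with
      (minus (scal (B * cos Th) (RInt (fun x => cos (psi x)) a b)) (scal (B * sin Th) (RInt (fun x => sin (psi x)) a b)))
      by (unfold minus, plus, opp, scal; simpl; unfold mult; simpl; ring) end.
    eapply is_RInt_ext; [| apply (is_RInt_minus _ _ _ _ _ _ (is_RInt_scal _ _ _ (B * cos Th) _ H1) (is_RInt_scal _ _ _ (B * sin Th) _ H2))].
    intros x _. unfold minus, plus, opp, scal; simpl. unfold mult; simpl. rewrite cos_plus. ring.
  - apply is_RInt_unique.
    match goal with |- is_RInt _ _ _ ?v => replace v with
      (plus (scal (B * sin Th) (RInt (fun x => cos (psi x)) a b)) (scal (B * cos Th) (RInt (fun x => sin (psi x)) a b)))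
      by (unfold minus, plus, opp, scal; simpl; unfold mult; simpl; ring) end.
    eapply is_RInt_ext; [| apply (is_RInt_plus _ _ _ _ _ _ (is_RInt_scal _ _ _ (B * sin Th) _ H1) (is_RInt_scal _ _ _ (B * cos Th) _ H2))].
    intros x _. unfold minus, plus, opp, scal; simpl. unfold mult; simpl. rewrite sin_plus. ring.
Qed.

Lemma amp e aa x : 0 < e -> 0 < aa <= 1/2 -> 1 - e <= x <= 1 - e*(1-aa) ->
  Rabs (/ sqrt (1 - x) - / sqrt e) <= 2 * aa / sqrt e.
Proof.
  intros He Ha Hx.
  set (s := 1 - x).
  assert (Hs : e*(1-aa) <= s <= e) by (unfold s; lra).
  assert (Hs0 : 0 < s) by nra.
  set (p := sqrt s). set (q := sqrt e).
  assert (Hp : 0 < p) by (apply sqrt_lt_R0; lra).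
  assert (Hq : 0 < q) by (apply sqrt_lt_R0; lra).
  assert (Hp2 : p*p = s) by (apply sqrt_sqrt; lra).
  assert (Hq2 : q*q = e) by (apply sqrt_sqrt; lra).
  assert (Hpq : p <= q) by (apply sqrt_le_1; lra).
  assert (Hpq2 : q <= 2*p) by nra.
  assert (Hd : q - p <= aa * q) by nra.
  replace (/p - /q) with ((q - p)/(p*q)) by (field; lra).
  rewrite Rabs_right.
  2:{ apply Rle_ge. unfold Rdiv. apply Rmult_le_pos; [lra|]. left. apply Rinv_0_lt_compat. nra. }
  apply (Rmult_le_reg_r (p*q)); [nra|].
  replace ((q - p) / (p * q) * (p * q)) with (q - p) by (field; lra).
  replace (2 * aa / q * (p * q)) with (2*aa*p) by (field; lra).
  nra.
Qed.

Lemma ln_div' x y : 0 < x -> 0 < y -> ln (x / y) = ln x - ln y.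
Proof. intros. unfold Rdiv. rewrite ln_mult, ln_Rinv; try lra. apply Rinv_0_lt_compat; lra. Qed.

Lemma exRI_der f a b : (forall x, ex_derive f x) -> @ex_RInt R_NormedModule f a b.
Proof.
  intros H. apply (ex_RInt_continuous (V:=R_CompleteNormedModule)). intros z _.
  apply (ex_derive_continuous (K:=R_AbsRing) (V:=R_NormedModule)). apply H.
Qed.

Lemma exRI_der_on f a b : a <= b -> (forall x, a <= x <= b -> ex_derive f x) -> @ex_RInt R_NormedModule f a b.
Proof.
  intros Hab H. apply (ex_RInt_continuous (V:=R_CompleteNormedModule)). intros z Hz.
  rewrite Rmin_left, Rmax_right in Hz by lra.
  apply (ex_derive_continuous (K:=R_AbsRing) (V:=R_NormedModule)). apply H; auto.
Qed.

Lemma sq_abs x : x ^ 2 = Rabs x ^ 2.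
Proof. rewrite RPow_abs, Rabs_right; auto. apply Rle_ge, pow2_ge_0. Qed.

Lemma cmod_bound (u v : C) : Cmod (Cminus u v) <= Rabs (fst u - fst v) + Rabs (snd u - snd v).
Proof.
  destruct u as [x1 y1], v as [x2 y2]. unfold Cmod, Cminus, Cplus, Copp. cbn [fst snd].
  set (p := x1 + - x2). set (r := y1 + - y2).
  change (x1 - x2) with p. change (y1 - y2) with r.
  pose proof (Rabs_pos p); pose proof (Rabs_pos r).
  rewrite <- (sqrt_pow2 (Rabs p + Rabs r)) by lra.
  apply sqrt_le_1.
  - pose proof (pow2_ge_0 p); pose proof (pow2_ge_0 r); lra.
  - apply pow2_ge_0.
  - rewrite (sq_abs p), (sq_abs r). nra.
Qed.

Lemma diff_bound (f g : R -> R) a b Hm : a <= b -> ex_RInt f a b -> ex_RInt g a b ->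
  (forall x, a <= x <= b -> Rabs (f x - g x) <= Hm) ->
  Rabs (RInt f a b - RInt g a b) <= (b - a) * Hm.
Proof.
  intros Hab Hf Hg Hb.
  assert (E : RInt f a b - RInt g a b = RInt (fun x => minus (f x) (g x)) a b).
  { rewrite (RInt_minus (V:=R_CompleteNormedModule)) by auto. reflexivity. }
  rewrite E. apply abs_RInt_le_const; [exact Hab| |].
  - apply (ex_RInt_minus (V:=R_NormedModule)); auto.
  - intros x Hx. apply Hb; auto.
Qed.

Theorem lemma4p8 (delta : R) (a : R -> R) :
  0 < delta < 1 ->
  (forall t, 1 < t -> 0 < a t) ->
  is_lim (fun t => Rpower t (- delta / 2) / a t) p_infty 0 ->
  is_lim (fun t => a t / Rpower t (- delta / 3)) p_infty 0 ->
  exists C T : R, forall t lam : R,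
    T <= t ->
    lam_c delta t <= lam <= Rpower t (1 - delta) - 1 ->
    Cmod (Cminus (J_B1 delta t lam (a t)) (J_main delta t lam (a t)))
      <= C * (Rpower t (-1/2 + 3 * delta / 2) * (a t) ^ 4).
Proof.
  intros Hd Hapos Hl1 Hl2.
  destruct (lim_ev _ Hl1 1 Rlt_0_1) as [M1 HM1].
  destruct (lim_ev _ Hl2 (1/2) ltac:(lra)) as [M2 HM2].
  exists 50, (Rmax 2 (Rmax (M1+1) (Rmax (M2+1) (exp (ln 2 / (1-delta)))))).
  intros t lam HT Hlam. unfold J_B1, J_main, CRInt. cbv zeta.
  assert (Ht : 2 <= t) by (eapply Rle_trans; [apply Rmax_l|exact HT]).
  assert (HtM1 : M1 < t).
  { assert (M1 + 1 <= t); [|lra]. eapply Rle_trans; [|exact HT].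
    eapply Rle_trans; [|apply Rmax_r]. apply Rmax_l. }
  assert (HtM2 : M2 < t).
  { assert (M2 + 1 <= t); [|lra]. eapply Rle_trans; [|exact HT].
    eapply Rle_trans; [|apply Rmax_r]. eapply Rle_trans; [|apply Rmax_r]. apply Rmax_l. }
  assert (HtE : exp (ln 2 / (1-delta)) <= t).
  { eapply Rle_trans; [|exact HT].
    eapply Rle_trans; [|apply Rmax_r]. eapply Rle_trans; [|apply Rmax_r]. apply Rmax_r. }
  set (l := ln t).
  assert (Hl : ln 2 / (1-delta) <= l).
  { unfold l. rewrite <- (ln_exp (ln 2 / (1-delta))). apply ln_le; auto. apply exp_pos. }
  assert (Hl0 : 0 < l).
  { unfold l. rewrite <- ln_1. apply ln_increasing; lra. }
  assert (Htl : t = exp l) by (unfold l; rewrite exp_ln; lra).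
  set (e := Rpower t (delta - 1)).
  assert (He : e = exp ((delta - 1) * l)) by reflexivity.
  assert (He0 : 0 < e) by (rewrite He; apply exp_pos).
  assert (He2 : e <= 1/2).
  { assert (2 <= exp ((1 - delta) * l)).
    { rewrite <- (exp_ln 2) by lra. apply exp_le.
      apply (Rmult_le_reg_r (/(1-delta))). apply Rinv_0_lt_compat; lra.
      replace ((1 - delta) * l * / (1 - delta)) with l by (field; lra). exact Hl. }
    replace e with (/ exp ((1 - delta) * l)).
    2:{ rewrite He, <- exp_Ropp. f_equal. ring. }
    replace (1/2) with (/2) by field. apply Rinv_le_contravar; lra. }
  set (aa := a t).
  assert (Ha0 : 0 < aa) by (apply Hapos; lra).
  assert (Ha2 : aa <= 1/2).
  { specialize (HM2 t HtM2). fold aa in HM2.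
    assert (Hp : Rpower t (- delta / 3) = exp (- delta / 3 * l)) by reflexivity.
    assert (Hp1 : exp (- delta / 3 * l) <= 1).
    { rewrite <- exp_0. apply exp_le. assert (0 < delta * l) by nra. lra. }
    rewrite Hp in HM2. assert (Hp0 := exp_pos (- delta / 3 * l)).
    apply Rabs_def2 in HM2. destruct HM2 as [HM2 _].
    apply (Rmult_lt_compat_r (exp (- delta / 3 * l))) in HM2; auto.
    replace (aa / exp (- delta / 3 * l) * exp (- delta / 3 * l)) with aa in HM2 by (field; lra).
    nra. }
  assert (Ha3 : 1 <= t * e * aa^2).
  { specialize (HM1 t HtM1). fold aa in HM1.
    assert (Hp : Rpower t (- delta / 2) = exp (- delta / 2 * l)) by reflexivity.
    rewrite Hp in HM1. assert (Hp0 := exp_pos (- delta / 2 * l)).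
    apply Rabs_def2 in HM1. destruct HM1 as [HM1 _].
    apply (Rmult_lt_compat_r aa) in HM1; auto.
    replace (exp (- delta / 2 * l) / aa * aa) with (exp (- delta / 2 * l)) in HM1 by (field; lra).
    assert (E1 : t * e * exp (- delta / 2 * l) ^ 2 = 1).
    { rewrite Htl, He. simpl. rewrite Rmult_1_r, <- !exp_plus. match goal with |- exp ?x = 1 => replace x with 0 by field; apply exp_0 end. }
    assert (exp (- delta / 2 * l) ^ 2 <= aa ^ 2) by (apply pow_incr; lra).
    assert (0 < t * e) by nra. nra. }
  set (k := e * (1 - aa)).
  set (z0 := 1 - e). set (z1 := 1 - k).
  assert (Hz01 : z0 <= z1) by (unfold z0, z1, k; nra).
  assert (Hlc : lam_c delta t = e / (1 - e)).
  { unfold lam_c. replace (Rpower t (1 - delta)) with (/e).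
    - replace (/e - 1) with ((1-e)/e) by (field; lra). field. split; lra.
    - rewrite He, <- exp_Ropp. unfold Rpower. fold l. f_equal. ring. }
  assert (Hlam0 : 0 < lam).
  { destruct Hlam as [Hlam _]. rewrite Hlc in Hlam.
    assert (0 < e / (1-e)) by (apply Rdiv_lt_0_compat; lra). lra. }
  set (L := ln (lam / lam_c delta t)).
  assert (HL : L = ln (1-e) - ln e + ln lam).
  { unfold L. rewrite Hlc, ln_div', ln_div'; try lra. apply Rdiv_lt_0_compat; lra. }
  set (beta := sqrt (t / (2*e*(1-e)))).
  assert (Hbpos : 0 < t / (2*e*(1-e))).
  { apply Rdiv_lt_0_compat; [lra|]. assert (0 < e*(1-e)) by nra. nra. }
  assert (Hb0 : 0 < beta) by (apply sqrt_lt_R0; auto).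
  assert (Hbb : beta * beta = t / (2*e*(1-e))) by (apply sqrt_sqrt; lra).
  assert (F3 : beta ^ 2 = t * (/(1-e) + /e) / 2).
  { replace (beta ^ 2) with (beta * beta) by ring. rewrite Hbb. field. split; lra. }
  assert (F1 : beta * e = sqrt (lam_c delta t * t / 2)).
  { rewrite <- (sqrt_pow2 (beta * e)) by nra. f_equal.
    replace ((beta * e) ^ 2) with ((beta * beta) * (e * e)) by ring. rewrite Hbb, Hlc.
    field. split; lra. }
  set (w := omega delta t lam).
  assert (F2 : w * beta = t * L / 2).
  { unfold w, omega. fold L. rewrite <- F1. rewrite Hlc.
    replace (beta * e * L / (1 + e / (1 - e)) * beta) with ((beta * beta) * e * (1-e) * L)
      by (field; lra).
    rewrite Hbb. field. split; lra. }
  set (K := Rpower t (-1/2) * sqrt (2 / (1 + lam_c delta t))).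
  assert (F4 : K * beta = / sqrt e).
  { assert (Hq : 0 < sqrt e) by (apply sqrt_lt_R0; lra).
    assert (HK : 0 <= K).
    { unfold K. apply Rmult_le_pos. unfold Rpower. left; apply exp_pos. apply sqrt_pos. }
    rewrite <- (sqrt_pow2 (K * beta)) by nra.
    rewrite <- (sqrt_pow2 (/ sqrt e)) by (left; apply Rinv_0_lt_compat; auto).
    f_equal.
    replace ((/ sqrt e) ^ 2) with (/ (sqrt e * sqrt e)) by (field; lra).
    rewrite sqrt_sqrt by lra.
    replace ((K * beta) ^ 2) with ((Rpower t (-1/2) * Rpower t (-1/2)) *
       (sqrt (2 / (1 + lam_c delta t)) * sqrt (2 / (1 + lam_c delta t))) * (beta * beta))
       by (unfold K; ring).
    rewrite Hbb, sqrt_sqrt.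
    2:{ rewrite Hlc. apply Rlt_le, Rdiv_lt_0_compat; [lra|].
        assert (0 < e/(1-e)) by (apply Rdiv_lt_0_compat; lra). lra. }
    replace (Rpower t (-1/2) * Rpower t (-1/2)) with (/ t).
    2:{ unfold Rpower. fold l. rewrite <- exp_plus. rewrite Htl at 1. rewrite <- exp_Ropp. f_equal. field. }
    rewrite Hlc. field. repeat split; lra. }
  set (v := w - beta * z0).
  set (Th := t * Fphase z0 lam - w ^ 2).
  assert (HI1 : RInt (fun x => fst (cexpi (x ^ 2))) w (w + aa * sqrt (lam_c delta t * t / 2))
     = beta * RInt (fun x => cos ((beta * x + v) ^ 2)) z0 z1).
  { rewrite <- F1.
    replace (w + aa * (beta * e)) with (beta * z1 + v) by (unfold v, z1, z0, k; ring).
    replace w with (beta * z0 + v) by (unfold v; ring).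
    rewrite <- (RInt_comp_lin (V:=R_CompleteNormedModule)).
    2:{ apply exRI_der; intros x; unfold cexpi; cbn [fst]; auto_derive; auto. }
    rewrite (RInt_scal (V:=R_CompleteNormedModule)).
    2:{ apply exRI_der; intros x; unfold cexpi; cbn [fst]; auto_derive; auto. }
    reflexivity. }
  assert (HI2 : RInt (fun x => snd (cexpi (x ^ 2))) w (w + aa * sqrt (lam_c delta t * t / 2))
     = beta * RInt (fun x => sin ((beta * x + v) ^ 2)) z0 z1).
  { rewrite <- F1.
    replace (w + aa * (beta * e)) with (beta * z1 + v) by (unfold v, z1, z0, k; ring).
    replace w with (beta * z0 + v) by (unfold v; ring).
    rewrite <- (RInt_comp_lin (V:=R_CompleteNormedModule)).
    2:{ apply exRI_der; intros x; unfold cexpi; cbn [snd]; auto_derive; auto. }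
    rewrite (RInt_scal (V:=R_CompleteNormedModule)).
    2:{ apply exRI_der; intros x; unfold cexpi; cbn [snd]; auto_derive; auto. }
    reflexivity. }
  rewrite HI1, HI2.
  destruct (rint_rot (K*beta) Th (fun x => (beta*x+v)^2) z0 z1) as [Rc Rs].
  { apply exRI_der; intros x; auto_derive; auto. }
  { apply exRI_der; intros x; auto_derive; auto. }
  cbv beta in Rc, Rs. rewrite F4 in Rc, Rs.
  set (R1 := RInt (fun x => cos ((beta * x + v) ^ 2)) z0 z1) in *.
  set (R2 := RInt (fun x => sin ((beta * x + v) ^ 2)) z0 z1) in *.
  eapply Rle_trans; [apply cmod_bound|].
  match goal with |- context [fst (Cmult (cexpi Th) ?X)] =>
    replace (fst (Cmult (cexpi Th) X)) with (RInt (fun x => / sqrt e * cos (Th + (beta * x + v) ^ 2)) z0 z1)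
      by (rewrite Rc; unfold Cmult, RtoC, cexpi; cbn [fst snd]; rewrite <- F4; match goal with |- ?a = ?b => change (@eq R a b) end; ring) end.
  match goal with |- context [snd (Cmult (cexpi Th) ?X)] =>
    replace (snd (Cmult (cexpi Th) X)) with (RInt (fun x => / sqrt e * sin (Th + (beta * x + v) ^ 2)) z0 z1)
      by (rewrite Rs; unfold Cmult, RtoC, cexpi; cbn [fst snd]; rewrite <- F4; match goal with |- ?a = ?b => change (@eq R a b) end; ring) end.
  cbn [fst snd].
  assert (Hk0 : 0 < k) by (unfold k; nra).
  assert (Hke : k <= e) by (unfold k; nra).
  set (M := 4 + /(k*k)).
  assert (HM0 : 0 < M) by (unfold M; assert (0 < /(k*k)) by (apply Rinv_0_lt_compat; nra); lra).
  assert (Hq : 0 < sqrt e) by (apply sqrt_lt_R0; lra).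
  set (Hm := 2*aa/sqrt e + / sqrt e * (t * (M * (aa*e)^3))).
  assert (HPQ : forall x, z0 <= x <= z1 ->
     Rabs (t * Fphase x lam - (Th + (beta*x+v)^2)) <= t * (M * (aa*e)^3)).
  { intros x Hx.
    assert (EPQ : t * Fphase x lam - (Th + (beta*x+v)^2) = t * (Fphase x lam - Fphase (1-e) lam
       - (ln (1-e) - ln e + ln lam)*(x-(1-e)) - (x-(1-e))^2 * (/(1-e) + /e)/2)).
    { unfold Th, v, z0. rewrite <- HL.
      replace ((beta * x + (w - beta * (1-e))) ^ 2) with
        (w^2 + 2*(w*beta)*(x-(1-e)) + beta^2*(x-(1-e))^2) by ring.
      rewrite F2, F3. field. split; lra. }
    rewrite EPQ, Rabs_mult, (Rabs_right t) by lra. apply Rmult_le_compat_l; [lra|].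
    eapply Rle_trans. apply (taylor3 lam e k x); auto; unfold z0, z1 in Hx; lra.
    fold M. apply Rmult_le_compat_l; [lra|]. apply pow_incr.
    unfold z0, z1, k in Hx. split; nra. }
  assert (Hx01 : forall x, z0 <= x <= z1 -> 0 < x /\ 0 < 1 - x).
  { intros x Hx. unfold z0, z1 in Hx. split; lra. }
  assert (B1 : Rabs (RInt (fun x => fst (Cmult (RtoC (/ sqrt (1 - x))) (cexpi (t * Fphase x lam)))) z0 z1
      - RInt (fun x => / sqrt e * cos (Th + (beta * x + v) ^ 2)) z0 z1) <= (z1 - z0) * Hm).
  { apply diff_bound; auto.
    - apply exRI_der_on; auto. intros x Hx. destruct (Hx01 x Hx).
      unfold Cmult, RtoC, cexpi, Fphase. cbn [fst snd]. auto_derive.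
      repeat split; try lra. apply Rgt_not_eq, sqrt_lt_R0; lra.
    - apply exRI_der. intros x. auto_derive; auto.
    - intros x Hx.
      replace (fst (Cmult (RtoC (/ sqrt (1 - x))) (cexpi (t * Fphase x lam)))) with
        (/ sqrt (1 - x) * cos (t * Fphase x lam)) by (unfold Cmult, RtoC, cexpi; cbn [fst snd]; ring).
      eapply Rle_trans. apply (core_bound _ _ _ _ cos). intros; apply Rabs_le, COS_bound. apply cos_lip.
      unfold Hm. apply Rplus_le_compat.
      + apply amp; unfold z0, z1, k in Hx; auto; lra.
      + rewrite (Rabs_right (/ sqrt e)) by (left; apply Rinv_0_lt_compat; auto).
        apply Rmult_le_compat_l. left; apply Rinv_0_lt_compat; auto. apply HPQ; auto. }
  assert (B2 : Rabs (RInt (fun x => snd (Cmult (RtoC (/ sqrt (1 - x))) (cexpi (t * Fphase x lam)))) z0 z1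
      - RInt (fun x => / sqrt e * sin (Th + (beta * x + v) ^ 2)) z0 z1) <= (z1 - z0) * Hm).
  { apply diff_bound; auto.
    - apply exRI_der_on; auto. intros x Hx. destruct (Hx01 x Hx).
      unfold Cmult, RtoC, cexpi, Fphase. cbn [fst snd]. auto_derive.
      repeat split; try lra. apply Rgt_not_eq, sqrt_lt_R0; lra.
    - apply exRI_der. intros x. auto_derive; auto.
    - intros x Hx.
      replace (snd (Cmult (RtoC (/ sqrt (1 - x))) (cexpi (t * Fphase x lam)))) with
        (/ sqrt (1 - x) * sin (t * Fphase x lam)) by (unfold Cmult, RtoC, cexpi; cbn [fst snd]; ring).
      eapply Rle_trans. apply (core_bound _ _ _ _ sin). intros; apply Rabs_le, SIN_bound. apply sin_lip.
      unfold Hm. apply Rplus_le_compat.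
      + apply amp; unfold z0, z1, k in Hx; auto; lra.
      + rewrite (Rabs_right (/ sqrt e)) by (left; apply Rinv_0_lt_compat; auto).
        apply Rmult_le_compat_l. left; apply Rinv_0_lt_compat; auto. apply HPQ; auto. }
  eapply Rle_trans. apply Rplus_le_compat; [exact B1 | exact B2].
  assert (HR : Rpower t (-1/2 + 3*delta/2) = t * e * sqrt e).
  { rewrite <- (Rpower_sqrt e) by lra. unfold Rpower. fold l. rewrite He, ln_exp.
    rewrite Htl. rewrite <- !exp_plus. f_equal. field. }
  rewrite HR.
  assert (Hkk : /(k*k) <= 4 * /(e*e)).
  { replace (4 * /(e*e)) with (/(e*e/4)) by (field; lra).
    apply Rinv_le_contravar. nra. unfold k. assert (e/2 <= e*(1-aa)) by nra. replace (e*e/4) with ((e/2)*(e/2)) by field. apply Rmult_le_compat; lra. }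
  assert (Hee : 4 <= /(e*e)).
  { replace 4 with (/(/4)) by field. apply Rinv_le_contravar. nra. nra. }
  assert (HMe : M * (e*e) <= 8).
  { assert (HMb : M <= 8 * /(e*e)) by (unfold M; lra).
    apply (Rmult_le_compat_r (e*e)) in HMb; [|nra].
    replace (8 * /(e*e) * (e*e)) with 8 in HMb by (field; lra). exact HMb. }
  set (q := sqrt e) in *.
  assert (Hqq : q * q = e) by (apply sqrt_sqrt; lra).
  assert (E : (z1 - z0) * Hm = 2 * aa^2 * q + t * aa^4 * q * e * (M * (e*e))).
  { unfold Hm, z1, z0, k. rewrite <- Hqq. field. lra. }
  rewrite E.
  assert (0 <= aa^2 * q * (t * e * aa^2 - 1)).
  { apply Rmult_le_pos; [|lra]. apply Rmult_le_pos; [apply pow2_ge_0|lra]. }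
  assert (0 < t * aa^4 * q * e) by (apply Rmult_lt_0_compat; [|lra]; apply Rmult_lt_0_compat; [|lra]; apply Rmult_lt_0_compat; [lra|]; apply pow_lt; lra).
  assert (t * aa^4 * q * e * (M * (e*e)) <= t * aa^4 * q * e * 8) by (apply Rmult_le_compat_l; lra).
  nra.
Qed.
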